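(* Let $F$ be a field with $\operatorname{char}F\ne2$ and let $L/F$ be a Galois extension with $\operatorname{Gal}(L/F)\cong G_1$. Then there is a unique quadratic extension $F(\sqrt a)$ of $F$ such that $F\subseteq F(\sqrt a)\subseteq E\subseteq L$ for some subfield $E$ of $L$ with $E/F$ Galois and $\operatorname{Gal}(E/F)\cong C$. The element $-a$ is not rigid.
   Context: $C$ is the cyclic group of order 4. An element $c\in\dot F\setminus(F^2\cup-F^2)$ is rigid if the set of nonzero values of $x_1^2+cx_2^2$ equals $\dot F^2\cup c\dot F^2$, and nonrigid otherwise. Commutators $[\sigma,\tau]=\sigma^{-1}\tau^{-1}\sigma\tau$. $G_1$ is the group generated by $x,y$ with relations $x^4=y^2=1$, $[x,y]^2=[[x,y],x]^2=1$, and $[[x,y],x]$ commutes with $x$ and $y$. *)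

(* Defs.v *)
From HB Require Import structures.
From mathcomp Require Import all_boot all_order all_algebra all_fingroup all_solvable all_field galois falgebra fieldext.
Set Implicit Arguments. Unset Strict Implicit. Unset Printing Implicit Defensive.
Import GRing.Theory.
Local Open Scope ring_scope.

Definition rigid (F : fieldType) (c : F) : Prop :=
  [/\ c != 0,
      ~ (exists b : F, c = b ^+ 2),
      ~ (exists b : F, c = - b ^+ 2) &
      forall v : F, v != 0 ->
        ((exists x1 x2 : F, v = x1 ^+ 2 + c * x2 ^+ 2) <->
         (exists b : F, b != 0 /\ (v = b ^+ 2 \/ v = c * b ^+ 2)))].

Definition C4_quadratic (F : fieldType) (L : splittingFieldType F)
    (K : {subfield L}) : Prop :=
  \dim K = 2%N /\
  exists E : {subfield L},
    [/\ (K <= E)%VS, galois 1%AS E, cyclic ('Gal(E / 1%AS))%g & #|('Gal(E / 1%AS))%g| = 4%N].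

(* Main.v *)
From HB Require Import structures.
From mathcomp Require Import all_boot all_order all_algebra all_fingroup all_solvable all_field galois falgebra fieldext.
From mathcomp Require Import ring.
From Stdlib Require Import Classical.
Require Import Defs.
Import GRing.Theory.
Set Implicit Arguments. Unset Strict Implicit. Unset Printing Implicit Defensive.
Local Open Scope group_scope.
Definition G1rel {gT : finGroupType} (a b : gT) : bool :=
 [&& a ^+ 4 == 1, b ^+ 2 == 1, [~ a, b] ^+ 2 == 1, [~ [~ a, b], a] ^+ 2 == 1, [~ [~ [~ a, b], a], a] == 1 & [~ [~ [~ a, b], a], b] == 1].

Lemma homG1P (gT : finGroupType) (G : {set gT}) :
  reflect (exists a b : gT, (<[a]> <*> <[b]>)%g = G /\ G1rel a b)
   (G \homg Grp (x : y : (x ^+ 4, y ^+ 2, [~ x, y] ^+ 2, [~ [~ x, y], x] ^+ 2,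
                   [~ [~ [~ x, y], x], x], [~ [~ [~ x, y], x], y]))).
Proof.
rewrite /Presentation.hom /=.
apply: (iffP existsP).
  case=> [[a b]] /=. rewrite !xpair_eqE /=.
  case/andP => /eqP h1 /andP[h2 /andP[h3 /andP[h4 /andP[h5 /andP[h6 h7]]]]]. exists a, b. split => //.
  rewrite /G1rel. by rewrite h2 h3 h4 h5 h6 h7.
case=> a [b [<- /andP[h2 /andP[h3 /andP[h4 /andP[h5 /andP[h6 h7]]]]]]]. exists (a, b).
by rewrite /= !xpair_eqE /= eqxx h2 h3 h4 h5 h6 h7.
Qed.

Lemma expg_pair (gT qT : finGroupType) (x : gT) (y : qT) n :
  ((x, y) : gT * qT) ^+ n = (x ^+ n, y ^+ n).
Proof. by elim: n => [|n IH]; rewrite ?expg0 // !expgS IH. Qed.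

Lemma G1rel_pair (gT qT : finGroupType) (a b : gT) (p q : qT) :
  G1rel a b -> G1rel p q -> G1rel ((a, p) : gT * qT) (b, q).
Proof.
rewrite /G1rel => /andP[h2 /andP[h3 /andP[h4 /andP[h5 /andP[h6 h7]]]]].
move=> /andP[k2 /andP[k3 /andP[k4 /andP[k5 /andP[k6 k7]]]]].
have cE (u v : gT) (s t : qT) : [~ ((u, s) : gT * qT), (v, t)] = ([~ u, v], [~ s, t]) by [].
rewrite !cE !expg_pair !xpair_eqE.
by rewrite h2 h3 h4 h5 h6 h7 k2 k3 k4 k5 k6 k7.
Qed.

Section Lift.
Variables (gT qT : finGroupType) (G : {group gT}).
Hypothesis isoG : G \isog Grp (x : y : (x ^+ 4, y ^+ 2, [~ x, y] ^+ 2, [~ [~ x, y], x] ^+ 2,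
                   [~ [~ [~ x, y], x], x], [~ [~ [~ x, y], x], y])).

Lemma lift_morph (a b : gT) (p q : qT) :
  (<[a]> <*> <[b]>)%g = G -> G1rel a b -> G1rel p q ->
  exists f : {morphism G >-> qT}, f a = p /\ f b = q.
Proof.
move=> defG rab rpq.
pose H := (<[((a, p) : gT * qT)]> <*> <[(b, q)]>)%G.
have homH : H \homg G.
  rewrite isoG; apply/homG1P; exists (a, p), (b, q); split => //.
  exact: G1rel_pair.
have leHG := leq_homg homH.
pose f1 := @fst_morphism gT qT.
have imH : f1 @* H = G.
  by rewrite morphimY ?subsetT // !morphim_cycle ?inE.
have sHT : H \subset [set: gT * qT] by rewrite subsetT.
pose f := restrm_morphism sHT f1.
have imf : f @* H = G by rewrite morphim_restrm setIid.
have injf : 'injm f.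
  rewrite ker_restrm.
  have := card_morphim f1 H; rewrite imH setTI -indexgI => cG.
  have := Lagrange (subsetIl H ('ker f1)).
  move=> LH.
  have pos := cardG_gt0 (H :&: 'ker f1)%G.
  have : #|H :&: 'ker f1| <= 1.
    rewrite -(leq_pmul2r (indexg_gt0 H (H :&: 'ker f1))) mul1n LH -cG; exact: leHG.
  by move=> le1; apply/trivgP; apply/eqP; rewrite eq_sym eqEcard sub1G cards1 le1.
pose g := fun x => (invm injf x).2.
have gM : {in G &, {morph g : x y / (x * y)%g}}.
  move=> x y Gx Gy; rewrite /g morphM //= ?imf //.
pose gm := Morphism gM.
exists gm; rewrite /= /g.
have Hap : ((a, p) : gT * qT) \in H by rewrite mem_gen // inE cycle_id.
have Hbq : ((b, q) : gT * qT) \in H by rewrite mem_gen // inE cycle_id orbT.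
split.
  by have := invmE injf Hap; rewrite /= => ->.
by have := invmE injf Hbq; rewrite /= => ->.
Qed.
End Lift.

Definition D4T := ('Z_4 * bool)%type.
HB.instance Definition _ := Finite.on D4T.
Definition d4mul (x y : D4T) : D4T :=
  ((x.1 + (if x.2 then - y.1 else y.1))%R, x.2 (+) y.2).
Definition d4inv (x : D4T) : D4T := (if x.2 then x.1 else (- x.1)%R, x.2).
Definition d4one : D4T := (0%R, false).
Fact d4mulA : associative d4mul.
Proof.
move=> [k e] [l f] [m g]; rewrite /d4mul /=; congr (_, _); last by rewrite addbA.
by case: e; case: f => /=; rewrite ?opprD ?opprK addrA.
Qed.
Fact d4mul1 : left_id d4one d4mul.
Proof. by move=> [k e]; rewrite /d4mul /= add0r. Qed.
Fact d4mulV : left_inverse d4one d4inv d4mul.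
Proof. by move=> [k e]; rewrite /d4mul /d4inv /=; case: e; rewrite /= ?subrr ?addNr // addbb. Qed.
HB.instance Definition _ := Finite_isGroup.Build D4T d4mulA d4mul1 d4mulV.

Definition rr : D4T := (1%R, false).
Definition ss : D4T := (0%R, true).
Definition evenD (d : D4T) : bool := ~~ odd (val d.1).
Ltac d4c d := case: d => [[[|[|[|[|?]]]] ?] []]; try by [].
Lemma evenDM (d e : D4T) : evenD (d * e)%g = (evenD d == evenD e).
Proof. d4c d; d4c e; vm_compute; reflexivity. Qed.
Lemma test2 : (rr ^+ 4 == 1)%g && ([~ rr, ss] ^+ 2 == 1)%g.
Proof. vm_compute. reflexivity. Qed.

Lemma d4mulE (d e : D4T) : (d * e)%g = d4mul d e. Proof. by []. Qed.
Lemma d4_rel1 : G1rel rr ss. Proof. vm_compute; reflexivity. Qed.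
Lemma d4_rel2 : G1rel rr 1. Proof. vm_compute; reflexivity. Qed.
Lemma d4_ev_rr : evenD rr = false. Proof. by vm_compute. Qed.
Lemma d4_ev_ss : evenD ss = true. Proof. by vm_compute. Qed.
Lemma d4_ev_1 : evenD 1 = true. Proof. by vm_compute. Qed.
Lemma d4_C4 (d : D4T) : evenD d ==> ~~ d.2 ==> (d == 1) || (d == rr ^+ 2).
Proof. d4c d; vm_compute; reflexivity. Qed.
Lemma d4_comm (d : D4T) : ~~ d.2 ==> (rr * d * rr^-1 == d).
Proof. d4c d; vm_compute; reflexivity. Qed.
Lemma d4_rr2 : (rr ^+ 2 != 1) && ((rr ^+ 2).1 != 0%R) && (rr ^+ 2 * rr ^+ 2 == 1).
Proof. vm_compute; reflexivity. Qed.
Lemma d4_Uconj (d : D4T) : (d.1 == 0%R) ==> ((rr ^+ 2 * d * rr ^+ 2).1 == 0%R).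
Proof. d4c d; vm_compute; reflexivity. Qed.
Lemma d4_Umul (d e : D4T) : (d.1 == 0%R) ==> (e.1 == 0%R) ==> ((d * e).1 == 0%R).
Proof. d4c d; d4c e; vm_compute; reflexivity. Qed.
Lemma d4_w : ((rr * ss * rr).1 == 0%R) && (ss.1 == 0%R) && ((1 : D4T).1 == 0%R).
Proof. vm_compute; reflexivity. Qed.
Lemma d4_evenU (d : D4T) : evenD d ==> (d.1 == 0%R) || ((d * rr ^+ 2).1 == 0%R).
Proof. d4c d; vm_compute; reflexivity. Qed.
Lemma d4_notT (d e : D4T) : (~~ (d * e).2) = (~~ d.2 == ~~ e.2).
Proof. d4c d; d4c e; vm_compute; reflexivity. Qed.
Lemma d4_order : #[rr] = 4%N.
Proof.
have h4 : (#[rr] %| 4)%N by rewrite order_dvdn; vm_compute.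
have h2 : ~~ (#[rr] %| 2)%N by rewrite order_dvdn; vm_compute.
have := dvdn_leq (isT : (0 < 4)%N) h4.
move: h4 h2; case: #[rr] => [|[|[|[|[|]]]]] //.
Qed.

Lemma agree_gen (gT : finGroupType) (G : {group gT}) (a b : gT) (f1 f2 : gT -> bool) :
  (<[a]> <*> <[b]>)%g = G ->
  {in G &, forall u v, f1 (u * v) = (f1 u == f1 v)} ->
  {in G &, forall u v, f2 (u * v) = (f2 u == f2 v)} ->
  f1 a = f2 a -> f1 b = f2 b -> {in G, f1 =1 f2}.
Proof.
move=> defG m1 m2 ea eb.
have t1 : f1 1 = true by have := m1 _ _ (group1 G) (group1 G); rewrite mulg1 => ->; rewrite eqxx.
have t2 : f2 1 = true by have := m2 _ _ (group1 G) (group1 G); rewrite mulg1 => ->; rewrite eqxx.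
have gs : group_set [set u in G | f1 u == f2 u].
  apply/group_setP; split; first by rewrite inE group1 t1 t2.
  move=> u v; rewrite !inE => /andP[Gu /eqP e1] /andP[Gv /eqP e2].
  by rewrite groupM // (m1 _ _ Gu Gv) (m2 _ _ Gu Gv) e1 e2 eqxx.
pose X := Group gs.
have Ga : a \in G by rewrite -defG mem_gen // inE cycle_id.
have Gb : b \in G by rewrite -defG mem_gen // inE cycle_id orbT.
have sGX : G \subset X.
  by rewrite -defG join_subG !cycle_subG !inE Ga Gb ea eb !eqxx.
by move=> u /(subsetP sGX); rewrite inE => /andP[_ /eqP].
Qed.

Lemma cyc4_sq (gT : finGroupType) (h u v : gT) : #[h] = 4%N ->
  u \in <[h]> -> v \in <[h]> ->
  ((u * v) ^+ 2 == 1) = ((u ^+ 2 == 1) == (v ^+ 2 == 1)).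
Proof.
move=> oh /cycleP[i ->] /cycleP[j ->].
have E k : ((h ^+ k) ^+ 2 == 1) = ~~ odd k.
  by rewrite -expgM -order_dvdn oh (_ : 4 = 2 * 2)%N // dvdn_pmul2r // dvdn2.
by rewrite -expgD !E oddD; case: (odd i); case: (odd j).
Qed.

Section Main.
Local Open Scope ring_scope.
Variables (F : fieldType) (L : splittingFieldType F).
Hypothesis char2 : (2 \notin [pchar F])%N.
Hypothesis galL : galois 1%AS {:L}.
Definition G0 : {group gal_of {:L}} := ('Gal({:L} / 1%AS))%G.
Variables gx gy : gal_of {:L}.
Hypotheses (defG0 : (<[gx]> <*> <[gy]>)%g = G0) (relxy : G1rel gx gy).
Variables phi4 phi8 : {morphism G0 >-> D4T}.
Hypotheses (p4x : phi4 gx = rr) (p4y : phi4 gy = 1%g)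
           (p8x : phi8 gx = rr) (p8y : phi8 gy = ss).

Lemma gM (g h : gal_of {:L}) (a : L) : (g * h)%g a = h (g a).
Proof. exact: galM (memvf a). Qed.

Lemma Gx : gx \in G0. Proof. by rewrite -defG0 mem_gen // inE cycle_id. Qed.
Lemma Gy : gy \in G0. Proof. by rewrite -defG0 mem_gen // inE cycle_id orbT. Qed.
Lemma x4 : (gx ^+ 4 = 1)%g.
Proof. by move: relxy => /andP[/eqP]. Qed.
Lemma x2x2 : (gx ^+ 2 * gx ^+ 2 = 1)%g.
Proof. by rewrite -expgD x4. Qed.
Lemma Gxn n : (gx ^+ n)%g \in G0. Proof. exact: groupX Gx. Qed.

Definition par4 g := evenD (phi4 g).
Definition par8 g := evenD (phi8 g).
Lemma par4M : {in G0 &, forall u v, par4 (u * v)%g = (par4 u == par4 v)}.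
Proof. by move=> u v Gu Gv; rewrite /par4 morphM // evenDM. Qed.
Lemma par8M : {in G0 &, forall u v, par8 (u * v)%g = (par8 u == par8 v)}.
Proof. by move=> u v Gu Gv; rewrite /par8 morphM // evenDM. Qed.
Lemma agree48 : {in G0, par4 =1 par8}.
Proof.
apply: (agree_gen defG0 par4M par8M).
  by rewrite /par4 /par8 p4x p8x.
by rewrite /par4 /par8 p4y p8y d4_ev_1 d4_ev_ss.
Qed.
Lemma not2 : {in G0, forall g, ~~ (phi4 g).2}.
Proof.
have := @agree_gen _ G0 gx gy (fun g => ~~ (phi4 g).2) (fun _ => true) defG0.
apply.
- by move=> u v Gu Gv /=; rewrite morphM // d4_notT.
- by [].
- by rewrite p4x.
- by rewrite p4y.
Qed.
Lemma par4x : par4 gx = false. Proof. by rewrite /par4 p4x d4_ev_rr. Qed.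
Lemma par4y : par4 gy = true. Proof. by rewrite /par4 p4y d4_ev_1. Qed.
Lemma par4xV : par4 (gx^-1)%g = false.
Proof.
have := par4M Gx (groupVr Gx); rewrite mulgV par4x.
rewrite {1}/par4 morph1 d4_ev_1.
by case: (par4 (gx^-1)%g).
Qed.

Definition Sset := [set g in G0 | par4 g].
Fact S_gs : group_set Sset.
Proof.
apply/group_setP; split; first by rewrite inE group1 /par4 morph1 d4_ev_1.
move=> u v; rewrite !inE => /andP[Gu pu] /andP[Gv pv].
by rewrite groupM // par4M // pu pv.
Qed.
Definition S := Group S_gs.
Lemma inS g : (g \in S) = (g \in G0) && par4 g. Proof. by rewrite inE. Qed.
Lemma SG0 : S \subset G0. Proof. by apply/subsetP=> g; rewrite inS => /andP[]. Qed.
Lemma Sx : gx \notin S. Proof. by rewrite inS par4x andbF. Qed.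
Lemma Sy : gy \in S. Proof. by rewrite inS Gy par4y. Qed.
Lemma Sx2 : (gx ^+ 2)%g \in S.
Proof. by rewrite inS Gxn expgS expg1 par4M ?Gx // par4x. Qed.
Lemma S_or g : g \in G0 -> g \notin S -> (g * gx^-1)%g \in S.
Proof.
move=> Gg; rewrite !inS Gg /= => pg.
by rewrite groupM ?groupV ?Gx // par4M ?groupV ?Gx // par4xV (negbTE pg).
Qed.
Lemma S_conj g : g \in S -> (gx * g * gx^-1)%g \in S.
Proof.
rewrite !inS => /andP[Gg pg].
by rewrite !groupM ?groupV ?Gx // !par4M ?groupM ?groupV ?Gx // par4x pg par4xV.
Qed.

Definition K : {subfield L} := fixedField_aspace S.
Lemma fixK a : reflect (forall g, g \in S -> g a = a) (a \in K).
Proof. exact: fixedFieldP (memvf a). Qed.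


Lemma gB (g : gal_of {:L}) (a b : L) : g (a - b) = g a - g b. Proof. exact: rmorphB. Qed.
Lemma gD (g : gal_of {:L}) (a b : L) : g (a + b) = g a + g b. Proof. exact: rmorphD. Qed.
Lemma gN (g : gal_of {:L}) (a : L) : g (- a) = - g a. Proof. exact: rmorphN. Qed.
Lemma gMul (g : gal_of {:L}) (a b : L) : g (a * b) = g a * g b. Proof. exact: rmorphM. Qed.
Lemma gV (g : gal_of {:L}) (a : L) : g (a^-1) = (g a)^-1. Proof. exact: fmorphV. Qed.
Lemma gX (g : gal_of {:L}) (a : L) n : g (a ^+ n) = (g a) ^+ n. Proof. exact: rmorphXn. Qed.
Lemma g1 (g : gal_of {:L}) : g 1 = 1. Proof. exact: rmorph1. Qed.

Lemma invK (gT : finGroupType) (u v : gT) : (v * v = 1)%g -> u = (u * v * v)%g.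
Proof. by move=> h; rewrite -mulgA h mulg1. Qed.

Lemma two_neq0 : (2%:R : L) != 0.
Proof.
have h : (2%:R : F) != 0.
  by move: char2; rewrite inE /=.
by rewrite -(rmorph_nat (in_alg L)) fmorph_eq0.
Qed.
Lemma neg_eq0 (a : L) : a = - a -> a = 0.
Proof.
move=> h; have : a * 2%:R = 0 by rewrite mulr_natr mulr2n {1}h addNr.
by move/eqP; rewrite mulf_eq0 (negbTE two_neq0) orbF => /eqP.
Qed.
Lemma gF (g : gal_of {:L}) (k : F) : g k%:A = k%:A.
Proof. exact: rmorph_alg. Qed.
Lemma g_neq0 (g : gal_of {:L}) (a : L) : a != 0 -> g a != 0.
Proof. by rewrite fmorph_eq0. Qed.

Lemma exists_moved (H : {group gal_of {:L}}) (g : gal_of {:L}) :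
  g \notin H -> exists t, t \in fixedField H /\ g t != t.
Proof.
move=> gH; apply: NNPP => hn; apply: (negP gH).
have sub : (fixedField H <= fixedField [set g])%VS.
  apply/subvP => a Ha; apply/fixedFieldP; first exact: memvf.
  move=> y /set1P ->; apply/eqP/negPn/negP => ne; apply: hn; exists a; split=> //.
have := galois_connection [set g] (subvf (fixedField H)).
rewrite sub gal_fixedField => /idP.
by rewrite sub1set.
Qed.

Lemma kerE g : g \in G0 -> (g \in 'ker phi4) = (phi4 g == 1%g).
Proof. by move=> Gg; apply/kerP/eqP. Qed.

Lemma p4x2 : phi4 (gx ^+ 2)%g = (rr ^+ 2)%g.
Proof. by rewrite morphX ?Gx // p4x. Qed.
Lemma p8x2 : phi8 (gx ^+ 2)%g = (rr ^+ 2)%g.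
Proof. by rewrite morphX ?Gx // p8x. Qed.

Lemma rr2E : (rr ^+ 2 * rr ^+ 2 = 1)%g.
Proof. by move: d4_rr2 => /andP[_ /eqP]. Qed.

Lemma C4_step : exists eta, eta \in K /\ eta * gx eta = -1.
Proof.
have nk : (gx ^+ 2)%g \notin 'ker phi4.
  rewrite kerE ?Gxn // p4x2; by move: d4_rr2 => /andP[/andP[]].
have [t [Ht nt]] := exists_moved nk.
have [_ fixt] := mem_fixedFieldP Ht.
pose b := t - (gx ^+ 2)%g t.
have bn0 : b != 0 by rewrite subr_eq0 eq_sym.
have xx a : (gx ^+ 2)%g ((gx ^+ 2)%g a) = a by rewrite -gM x2x2 gal_id.
have bx2 : (gx ^+ 2)%g b = - b by rewrite /b gB -gM x2x2 gal_id opprB.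
have bfix n : n \in 'ker phi4 -> n b = b.
  move=> kn; have Gn := dom_ker kn.
  rewrite /b gB fixt //; congr (_ - _); rewrite -gM.
  have -> : (gx ^+ 2 * n = (gx ^+ 2 * n * gx ^+ 2) * gx ^+ 2)%g.
    exact: invK x2x2.
  have G2 := Gxn 2.
  have Gm : (gx ^+ 2 * n)%g \in G0 by rewrite groupM.
  have Gm2 : (gx ^+ 2 * n * gx ^+ 2)%g \in G0 by rewrite groupM.
  rewrite gM fixt // kerE //.
  by rewrite (morphM phi4 Gm G2) (morphM phi4 G2 Gn) p4x2 (mker kn) mulg1 rr2E.
have sgn g : g \in G0 -> (phi4 g = 1%g -> g b = b) /\ (phi4 g = (rr ^+ 2)%g -> g b = - b).
  move=> Gg; split=> pg; first by apply: bfix; rewrite kerE // pg.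
  have -> : g = ((g * gx ^+ 2) * gx ^+ 2)%g by exact: invK x2x2.
  have G2 := Gxn 2.
  have Gm : (g * gx ^+ 2)%g \in G0 by rewrite groupM.
  rewrite gM bfix ?bx2 // kerE //.
  by rewrite (morphM phi4 Gg G2) pg p4x2 rr2E.
have cases g : g \in S -> phi4 g = 1%g \/ phi4 g = (rr ^+ 2)%g.
  rewrite inS => /andP[Gg pg]; have := d4_C4 (phi4 g).
  by rewrite -[evenD (phi4 g)]/(par4 g) pg (not2 Gg) /= => /orP[/eqP|/eqP]; [left|right].
have conj g : g \in G0 -> phi4 (gx * g * gx^-1)%g = phi4 g.
  move=> Gg; rewrite !morphM ?groupM ?groupV ?Gx // morphV ?Gx // p4x.
  by apply/eqP; move: (d4_comm (phi4 g)); rewrite (not2 Gg).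
have gxb g : g \in G0 -> g (gx b) = gx ((gx * g * gx^-1)%g b).
  move=> Gg; have e : (gx * g = (gx * g * gx^-1) * gx)%g by rewrite -mulgA mulVg mulg1.
  by rewrite -(gM gx g) [in LHS]e gM.
pose d := b * gx b; pose c := b ^+ 2.
have gb0 : gx b != 0 by apply: g_neq0.
exists (d / c); split.
  apply/fixK => g Sg; have Gg := subsetP SG0 g Sg.
  have Gc : (gx * g * gx^-1)%g \in G0 by rewrite !groupM ?groupV ?Gx.
  rewrite gMul gV gMul gX gxb //.
  have [p1|p2] := cases g Sg.
    rewrite (proj1 (sgn g Gg) p1) (proj1 (sgn _ Gc)) ?conj //.
  rewrite (proj2 (sgn g Gg) p2) (proj2 (sgn _ Gc)) ?conj // gN.
  by rewrite /d /c mulrNN sqrrN.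
have gxgx : gx (gx b) = - b by rewrite -gM (_ : (gx * gx = gx ^+ 2)%g) ?bx2 // expgS expg1.
rewrite gMul gV gMul gX gxgx /d /c.
field.
by rewrite gb0 bn0.
Qed.

Lemma D4_step : exists dl cg, [/\ dl != 0, gy dl = - dl, cg \in K & dl ^+ 2 = cg * gx cg].
Proof.
pose Uset := [set g in G0 | (phi8 g).1 == 0%R].
have U_gs : group_set Uset.
  apply/group_setP; split; first by rewrite inE group1 morph1; case/andP: d4_w => /andP[].
  move=> u v; rewrite !inE => /andP[Gu pu] /andP[Gv pv].
  by rewrite groupM // morphM //; move: (d4_Umul (phi8 u) (phi8 v)); rewrite pu pv.
pose U := Group U_gs.
have inU g : (g \in U) = (g \in G0) && ((phi8 g).1 == 0%R) by rewrite inE.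
have G2 := Gxn 2.
have nU : (gx ^+ 2)%g \notin U.
  by rewrite inU G2 p8x2 /=; case/andP: d4_rr2 => /andP[].
have [t [Ht nt]] := exists_moved nU.
have [_ fixt] := mem_fixedFieldP Ht.
pose b := t - (gx ^+ 2)%g t.
have bn0 : b != 0 by rewrite subr_eq0 eq_sym.
have bx2 : (gx ^+ 2)%g b = - b by rewrite /b gB -gM x2x2 gal_id opprB.
have bfix u : u \in U -> u b = b.
  move=> Uu; have /andP[Gu pu] : (u \in G0) && ((phi8 u).1 == 0%R) by rewrite -inU.
  rewrite /b gB fixt //; congr (_ - _); rewrite -gM.
  have -> : (gx ^+ 2 * u = (gx ^+ 2 * u * gx ^+ 2) * gx ^+ 2)%g.
    exact: invK x2x2.
  have Gm : (gx ^+ 2 * u)%g \in G0 by rewrite groupM.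
  have Gm2 : (gx ^+ 2 * u * gx ^+ 2)%g \in G0 by rewrite groupM.
  rewrite gM fixt // inU Gm2 /=.
  rewrite (morphM phi8 Gm G2) (morphM phi8 G2 Gu) p8x2.
  by move: (d4_Uconj (phi8 u)); rewrite pu.
have sgn g : g \in S -> g b = b \/ g b = - b.
  move=> Sg; have Gg := subsetP SG0 g Sg.
  have pg : evenD (phi8 g) by rewrite -[evenD _]/(par8 g) -agree48 // -(andTb (par4 g)) -Gg -inS.
  move: (d4_evenU (phi8 g)); rewrite pg /= => /orP[p1|p2].
    by left; apply: bfix; rewrite inU Gg.
  right; have -> : g = ((g * gx ^+ 2) * gx ^+ 2)%g by exact: invK x2x2.
  have Gm : (g * gx ^+ 2)%g \in G0 by rewrite groupM.
  rewrite gM bfix ?bx2 // inU Gm /= (morphM phi8 Gg G2) p8x2 //.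
have Uy : gy \in U by rewrite inU Gy p8y; case/andP: d4_w => /andP[].
pose w := (gx * gy * gx)%g.
have Gw : w \in G0 by rewrite !groupM ?Gx ?Gy.
have Uw : w \in U.
  rewrite inU Gw /w !morphM ?groupM ?Gx ?Gy // p8x p8y.
  by case/andP: d4_w => /andP[].
have w3 : (gx * gy = w * gx ^+ 3)%g by rewrite /w -mulgA -expgS x4 mulg1.
have gx3 : (gx ^+ 3)%g b = - gx b.
  by rewrite expgSr gM bx2 gN.
exists (b * gx b), (b ^+ 2); split.
- by rewrite mulf_neq0 // g_neq0.
- by rewrite gMul (bfix _ Uy) -gM w3 gM (bfix _ Uw) gx3 mulrN.
- apply/fixK => g Sg; rewrite gX.
  by case: (sgn g Sg) => ->; rewrite ?sqrrN.
- by rewrite gX; ring.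
Qed.

Lemma inF1 (a : L) : a \in 1%VS -> exists k : F, a = k%:A.
Proof. by case/vlineP=> k ->; exists k. Qed.

Lemma gxS_eq g (a : L) : g \in G0 -> g (gx a) = gx ((gx * g * gx^-1)%g a).
Proof.
move=> Gg; have e : (gx * g = (gx * g * gx^-1) * gx)%g by rewrite -mulgA mulVg mulg1.
by rewrite -(gM gx g) [in LHS]e gM.
Qed.

Lemma gxK (a : L) : a \in K -> gx a \in K.
Proof.
move=> /fixK Ka; apply/fixK => g Sg.
by rewrite gxS_eq ?(subsetP SG0) // Ka // S_conj.
Qed.

Lemma fixG0 (a : L) : a \in K -> gx a = a -> forall g, g \in G0 -> g a = a.
Proof.
move=> /fixK Ka xa g Gg; have [Sg|nSg] := boolP (g \in S); first exact: Ka.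
have e : g = (g * gx^-1 * gx)%g by rewrite -mulgA mulVg mulg1.
by rewrite e gM Ka ?S_or.
Qed.

Lemma inF (a : L) : a \in K -> gx a = a -> a \in 1%VS.
Proof.
move=> Ka xa.
have e : fixedField G0 = 1%VS := elimT galois_fixedField galL.
rewrite -e; apply/fixedFieldP; first exact: memvf.
exact: fixG0.
Qed.

Lemma gx2 (a : L) : gx (gx a) = (gx ^+ 2)%g a.
Proof. by rewrite -gM (_ : (gx * gx = gx ^+ 2)%g) // expgS expg1. Qed.

Lemma cardG0 : #|G0| = (#|S| * 2)%N.
Proof.
have e : G0 :\: S = (S :* gx)%g.
  apply/setP => g; rewrite in_setD mem_rcoset.
  have [Gg|nGg] := boolP (g \in G0).
    have [Sg|nSg] := boolP (g \in S); last by rewrite /= S_or.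
    apply/esym/negbTE; apply: contra Sx => Sgx.
    have -> : gx = ((g * gx^-1)^-1 * g)%g by rewrite invMg invgK -mulgA mulVg mulg1.
    by rewrite groupM ?groupV.
  rewrite andbF; apply/esym/negbTE; apply: contra nGg => Sgx.
  have -> : g = (g * gx^-1 * gx)%g by rewrite -mulgA mulVg mulg1.
  by rewrite groupM ?Gx // (subsetP SG0).
have := cardsID S G0; rewrite (setIidPr SG0) e card_rcoset => <-.
by rewrite muln2 addnn.
Qed.

Lemma dimK : \dim K = 2%N.
Proof.
have := dim_fixed_galois galL SG0.
rewrite -divgS ?SG0 // cardG0 mulKn ?cardG_gt0 //.
by rewrite dimv1 divn1.
Qed.

Lemma sub_eq (E1 E2 : {subfield L}) : (E1 <= E2)%VS -> (\dim E2 <= \dim E1)%N -> E1 = E2.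
Proof. by move=> s d; apply/val_inj/eqP; rewrite /= eqEdim s d. Qed.

Lemma notF_dim (r : L) : r \notin 1%VS -> (1 < \dim <<1; r>>)%N.
Proof.
move=> nr; rewrite dim_Fadjoin dimv1 muln1.
have : adjoin_degree 1%AS r != 1%N by rewrite adjoin_deg_eq1.
have : (0 < adjoin_degree 1%AS r)%N by [].
by case: (adjoin_degree _ _) => [|[|]].
Qed.

Lemma K_r0 : exists (a : F) (r : L), r ^+ 2 = a%:A /\ K = <<1; r>>%AS.
Proof.
have [t [Ht nt]] := exists_moved Sx.
have Kt : t \in K by [].
pose r := t - gx t.
have Kr : r \in K.
  apply/fixK => g Sg; rewrite gB (fixK _ Kt g Sg).
  by move/fixK: (gxK Kt) => ->.
have xt : gx (gx t) = t by rewrite gx2; apply: (fixK _ Kt); exact: Sx2.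
have xr : gx r = - r by rewrite /r gB xt opprB.
have rn0 : r != 0 by rewrite subr_eq0 eq_sym.
have nF : r \notin 1%VS.
  apply/negP => /inF1 [k rk].
  have : r = 0 by apply: neg_eq0; rewrite -{1}xr rk gF.
  by move/eqP; rewrite (negbTE rn0).
have Kr2 : r ^+ 2 \in K by apply/fixK => g Sg; rewrite gX (fixK _ Kr g Sg).
have [a ea] : exists a : F, r ^+ 2 = a%:A.
  apply: inF1; apply: inF => //; by rewrite gX xr sqrrN.
exists a, r; split => //.
apply/esym; apply: sub_eq.
  by apply/FadjoinP; split; [exact: sub1v|].
by rewrite dimK; apply: notF_dim.
Qed.

Lemma kerS : 'ker phi4 \subset S.
Proof.
apply/subsetP => g kg; have Gg := dom_ker kg.
by rewrite inS Gg /par4 (mker kg) d4_ev_1.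
Qed.

Lemma C4_K : C4_quadratic K.
Proof.
split; first exact: dimK.
pose E : {subfield L} := fixedField_aspace ('ker phi4).
have nk : 'ker phi4 <| G0 := ker_normal phi4.
have galE : galois 1%AS E := normal_fixedField_galois galL nk.
exists E; split => //.
- exact: fixedFieldS kerS.
- have sKME : (1%AS <= E <= {:L})%VS by rewrite sub1v subvf.
  have nKM : normalField 1%AS E by case/and3P: galE.
  have i1 := normalField_isog galL sKME nKM.
  have gE : 'Gal({:L} / E) = 'ker phi4 := gal_fixedField _.
  rewrite gE in i1.
  have i2 := first_isog phi4.
  have im : phi4 @* G0 = <[rr]>.
    transitivity (phi4 @* (<[gx]> <*> <[gy]>)); first by rewrite defG0.
    rewrite morphimY ?cycle_subG ?Gx ?Gy // !morphim_cycle ?Gx ?Gy //.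
    by rewrite p4x p4y cycle1 joingG1.
  rewrite im in i2.
  have i3 : 'Gal(E / 1%AS) \isog <[rr]> by rewrite isog_sym in i1; exact: isog_trans i1 i2.
  by rewrite (isog_cyclic i3) cycle_cyclic.
- have gE : 'Gal({:L} / E) = 'ker phi4 := gal_fixedField _.
  have sKME : (1%AS <= E <= {:L})%VS by rewrite sub1v subvf.
  have nKM : normalField 1%AS E by case/and3P: galE.
  have i1 := normalField_isog galL sKME nKM.
  rewrite gE in i1.
  have i2 := first_isog phi4.
  have im : phi4 @* G0 = <[rr]>.
    transitivity (phi4 @* (<[gx]> <*> <[gy]>)); first by rewrite defG0.
    rewrite morphimY ?cycle_subG ?Gx ?Gy // !morphim_cycle ?Gx ?Gy //.
    by rewrite p4x p4y cycle1 joingG1.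
  rewrite im in i2.
  have i3 : 'Gal(E / 1%AS) \isog <[rr]> by rewrite isog_sym in i1; exact: isog_trans i1 i2.
  by rewrite (card_isog i3); exact: d4_order.
Qed.

Lemma unique_K (K' : {subfield L}) : C4_quadratic K' -> K' = K.
Proof.
case=> dK' [E' [sKE' galE' cycC oC]].
have sKME : (1%AS <= E' <= {:L})%VS by rewrite sub1v subvf.
have nKM : normalField 1%AS E' by case/and3P: galE'.
pose psi := normalField_cast_morphism sKME nKM.
have impsi : psi @* G0 = 'Gal(E' / 1%AS) := normalField_img galL sKME nKM.
have psiE g a : g \in G0 -> a \in E' -> psi g a = g a.
  by move=> Gg Ea; apply: (normalField_cast_eq sKME nKM Gg Ea).
have [h eC] := cyclicP cycC.
have oh : #[h] = 4%N by rewrite -oC eC.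
have inC g : g \in G0 -> psi g \in <[h]> by move=> Gg; rewrite -eC -impsi mem_morphim.
pose ev g := ((psi g) ^+ 2 == 1)%g.
have evM : {in G0 &, forall u v, ev (u * v)%g = (ev u == ev v)}.
  by move=> u v Gu Gv; rewrite /ev morphM // (cyc4_sq oh) // inC.
have evy : ev gy.
  rewrite /ev -morphX ?Gy //.
  by move: relxy => /andP[_ /andP[/eqP -> _]]; rewrite morph1.
have evx : ev gx = false.
  apply/negP => ex.
  have all1 : {in G0, ev =1 (fun _ => true)}.
    apply: (agree_gen defG0 evM) => //.
  have : h \in psi @* G0 by rewrite impsi eC cycle_id.
  case/morphimP => g Gg _ eh.
  have := all1 g Gg; rewrite /ev -eh -order_dvdn oh.
  by [].
have agr : {in G0, ev =1 par4}.
  apply: (agree_gen defG0 evM par4M); by rewrite ?evx ?par4x ?evy ?par4y.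
have galKE' : galois K' E'.
  by apply: (galoisS _ galE'); rewrite sub1v sKE'.
have dE' : \dim E' = 4%N.
  by have := galois_dim galE'; rewrite dimv1 divn1 oC.
have oT : #|'Gal(E' / K')| = 2%N.
  by rewrite -(galois_dim galKE') dE' dK'.
have sTC : 'Gal(E' / K') \subset <[h]> by rewrite -eC galS // sub1v.
have inT u : u \in <[h]> -> (u ^+ 2 == 1)%g -> u \in 'Gal(E' / K').
  move=> Cu u2.
  have [->|n1] := eqVneq u 1%g; first exact: group1.
  have ou : #[u] = 2%N.
    have : (#[u] %| 2)%N by rewrite order_dvdn.
    have : #[u] != 1%N by rewrite order_eq1.
    have : (0 < #[u])%N := order_gt0 u.
    by case: #[u] => [|[|[|]]].
  have : (<[u]> == 'Gal(E' / K') :> {set _})%g.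
    by rewrite (eq_subG_cyclic (cycle_cyclic h)) ?cycle_subG // oT; apply/eqP.
  by move/eqP <-; exact: cycle_id.
apply: sub_eq; last by rewrite dimK dK'.
apply/subvP => a Ka'; apply/fixK => g Sg.
have Gg := subsetP SG0 g Sg.
have Ea := subvP sKE' a Ka'.
rewrite -psiE //; apply: (fixed_gal sKE') => //.
apply: inT; first exact: inC.
by rewrite -/(ev g) agr //; move: Sg; rewrite inS => /andP[].
Qed.

Lemma aB (x y : F) : (x - y)%:A = x%:A - y%:A :> L. Proof. exact: (rmorphB (in_alg L)). Qed.
Lemma aD (x y : F) : (x + y)%:A = x%:A + y%:A :> L. Proof. exact: (rmorphD (in_alg L)). Qed.
Lemma aM (x y : F) : (x * y)%:A = x%:A * y%:A :> L. Proof. exact: (rmorphM (in_alg L)). Qed.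
Lemma aX (x : F) n : (x ^+ n)%:A = x%:A ^+ n :> L. Proof. exact: (rmorphXn (in_alg L)). Qed.
Lemma aN (x : F) : (- x)%:A = - x%:A :> L. Proof. exact: (rmorphN (in_alg L)). Qed.
Lemma aV (x : F) : (x^-1)%:A = (x%:A)^-1 :> L. Proof. exact: (fmorphV (in_alg L)). Qed.
Lemma a1 : (1 : F)%:A = 1 :> L. Proof. exact: (rmorph1 (in_alg L)). Qed.
Lemma a0 : (0 : F)%:A = 0 :> L. Proof. exact: (rmorph0 (in_alg L)). Qed.
Lemma aInj (x y : F) : x%:A = y%:A :> L -> x = y. Proof. exact: (fmorph_inj (in_alg L)). Qed.
Lemma a_in1 (x : F) : x%:A \in (1%VS : {vspace L}).
Proof. by apply/vlineP; exists x. Qed.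
Lemma g2 (g : gal_of {:L}) : g 2%:R = 2%:R. Proof. exact: rmorph_nat. Qed.

Lemma sq_contra (g : gal_of {:L}) (d z : L) :
  d != 0 -> g d = - d -> g z = z -> d ^+ 2 = z ^+ 2 -> False.
Proof.
move=> dn0 gd gz /eqP; rewrite eqf_sqr => /orP[/eqP e|/eqP e].
  move: gd; rewrite e gz => h; have z0 := neg_eq0 h.
  by move: dn0; rewrite e z0 eqxx.
move: gd; rewrite e gN gz opprK => h; have z0 := neg_eq0 (esym h).
by move: dn0; rewrite e z0 oppr0 eqxx.
Qed.

Lemma not_rigid (a : F) (r : L) : r ^+ 2 = a%:A -> K = <<1; r>>%AS -> ~ rigid (- a).
Proof.
move=> ra eK.
have Kr : r \in K by rewrite eK memv_adjoin.
have nF : r \notin 1%VS.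
  apply/negP => /Fadjoin_idP e.
  have : \dim K = 1%N by rewrite eK /= e dimv1.
  by rewrite dimK.
have xr : gx r = - r.
  have : (gx r) ^+ 2 == r ^+ 2 by rewrite -gX ra gF.
  rewrite eqf_sqr => /orP[/eqP e|/eqP //].
  by case/negP: nF; apply: inF.
have rn0 : r != 0 by apply: contraNneq nF => ->; rewrite mem0v.
have xxK b : b \in K -> gx (gx b) = b by move=> Kb; rewrite gx2; apply: (fixK _ Kb); exact: Sx2.
have norm eta : eta \in K -> exists u v : F, eta * gx eta = (u ^+ 2 - a * v ^+ 2)%:A.
  move=> Ke.
  have Kxe := gxK Ke.
  pose u' := (eta + gx eta) / 2%:R.
  pose v' := (eta - gx eta) / (2%:R * r).
  have Ku' : u' \in K.
    apply/fixK => g Sg; rewrite /u' gMul gD gV g2 (fixK _ Ke g Sg).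
    by rewrite (fixK _ Kxe g Sg).
  have Kv' : v' \in K.
    apply/fixK => g Sg; rewrite /v' gMul gB gV gMul g2 (fixK _ Ke g Sg).
    by rewrite (fixK _ Kxe g Sg) (fixK _ Kr g Sg).
  have xu : gx u' = u' by rewrite /u' gMul gD gV g2 xxK // addrC.
  have xv : gx v' = v'.
    rewrite /v' gMul gB gV gMul g2 xxK // xr.
    rewrite mulrN invrN mulrN -mulNr opprB //.
  have [u eu] := inF1 (inF Ku' xu).
  have [v ev] := inF1 (inF Kv' xv).
  exists u, v.
  have e1 : eta = u' + v' * r.
    rewrite /u' /v'; field.
    by rewrite rn0 two_neq0.
  have e2 : gx eta = u' - v' * r.
    rewrite /u' /v'; field.
    by rewrite rn0 two_neq0.
  rewrite e2 {1}e1 aB aX aM aX -eu -ev -ra.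
  ring.
case=> _ _ _ R.
have [eta [Ke ee]] := C4_step.
have [u [v euv]] := norm eta Ke.
have huv : (-1 : F) = u ^+ 2 + (- a) * v ^+ 2.
  apply: aInj; rewrite aN a1 -ee euv; congr (_ %:A); ring.
have [b [bn0 hb]] : exists b : F, b != 0 /\ (-1 = b ^+ 2 \/ -1 = - a * b ^+ 2).
  apply/(R (-1)); first by rewrite oppr_eq0 oner_neq0.
  by exists u, v.
have bsq : b ^+ 2 = -1.
  case: hb => [-> //|hab].
  exfalso; case/negP: nF.
  have ea : a = (b^-1) ^+ 2.
    have : a * b ^+ 2 = 1 by rewrite -[LHS]opprK -mulNr -hab opprK.
    move=> h; rewrite -(mulfK (expf_neq0 2 bn0) a) h exprVn mul1r //.
  have : r ^+ 2 == ((b^-1)%:A) ^+ 2 by rewrite ra ea aX.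
  rewrite eqf_sqr => /orP[/eqP ->|/eqP ->]; first exact: a_in1.
  by rewrite -aN a_in1.
have [dl [cg [dn0 ydl Kcg edl]]] := D4_step.
have [u2 [v2 e2]] := norm cg Kcg.
set t := u2 ^+ 2 - a * v2 ^+ 2 in e2.
have tn0 : t != 0.
  apply: contraNneq dn0 => t0.
  have : dl ^+ 2 == 0 by rewrite edl e2 t0 a0.
  by rewrite expf_eq0.
have [c [cn0 hc]] : exists c : F, c != 0 /\ (t = c ^+ 2 \/ t = - a * c ^+ 2).
  apply/(R t tn0); exists u2, v2; rewrite /t; ring.
case: hc => hc.
  apply: (sq_contra dn0 ydl (gF gy c)).
  by rewrite edl e2 hc aX.
apply: (sq_contra dn0 ydl (z := r * (b * c)%:A)).
  by rewrite gMul gF (fixK _ Kr gy Sy).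
rewrite edl e2 hc exprMn ra -aX -aM; congr (_ %:A).
rewrite exprMn bsq; ring.
Qed.

Lemma main_sec : exists K : {subfield L},
    [/\ C4_quadratic K,
        forall K' : {subfield L}, C4_quadratic K' -> K' = K,
        exists (a : F) (r : L), r ^+ 2 = a%:A /\ K = <<1; r>>%AS &
        forall (a : F) (r : L), r ^+ 2 = a%:A -> K = <<1; r>>%AS -> ~ rigid (- a)].
Proof.
exists K; split; [exact: C4_K | exact: unique_K | exact: K_r0 | exact: not_rigid].
Qed.

End Main.

Local Open Scope ring_scope.

Theorem proposition3p8 (F : fieldType) (L : splittingFieldType F) :
  (2 \notin [pchar F])%N ->
  galois 1%AS {:L} ->
  ('Gal({:L} / 1%AS) \isog
     Grp (x : y : (x ^+ 4, y ^+ 2, [~ x, y] ^+ 2, [~ [~ x, y], x] ^+ 2,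
                   [~ [~ [~ x, y], x], x], [~ [~ [~ x, y], x], y])))%g ->
  exists K : {subfield L},
    [/\ C4_quadratic K,
        forall K' : {subfield L}, C4_quadratic K' -> K' = K,
        exists (a : F) (r : L), r ^+ 2 = a%:A /\ K = <<1; r>>%AS &
        forall (a : F) (r : L), r ^+ 2 = a%:A -> K = <<1; r>>%AS -> ~ rigid (- a)].
Proof.
move=> char2 galL isoG.
have [gx [gy [defG rel]]] := elimT (homG1P _) (isoGrp_hom isoG).
have [phi4 [p4x p4y]] := lift_morph isoG defG rel d4_rel2.
have [phi8 [p8x p8y]] := lift_morph isoG defG rel d4_rel1.
exact: (@main_sec F L char2 galL gx gy defG rel phi4 phi8 p4x p4y p8x p8y).
Qed.
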